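(* For the exact polytrope with index $n=5$, the function $$F(U,Q)=\big[U(4-7Q)-3(1-2Q)\big]\,U^{1/2}Q^{3/2}(1-U)^{-3/2}(1-Q)^{-5/2}$$ is constant along every solution in $(0,1)^2$ of the planar system $$\frac{dU}{d\lambda}=U(1-U)\big[(1-Q)(3-4U)-5Q(1-U)\big],\qquad \frac{dQ}{d\lambda}=Q(1-Q)\big[(2U-1)(1-Q)+Q(1-U)\big].$$ The fixed point $(1/3,1/3)$ corresponds to $F=-1/4$, the regular orbit corresponds to $F=0$, and the level sets $\{F=C\}$ with $-1/4<C<0$ are closed orbits around $(1/3,1/3)$.
   Context: This planar system is the restriction to $\{\Omega=0\}$ (the ''polytropic subset'') of the system for $(U,Q,\Omega)$ describing Newtonian static spherically symmetric perfect fluids, for index $n_0=5$; $U=u/(1+u)$, $Q=q/(1+q)$ with $u=4\pi r^3\rho/m$, $q=m/(r\eta)$, $\eta=\int_0^p dp'/\rho(p')$. The regular orbit is the one emanating from $(U,Q)=(3/4,0)$. *)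

(* Defs.v *)
From Stdlib Require Import Reals Lra.
From Coquelicot Require Import Coquelicot.
Open Scope R_scope.

Definition VU (U Q : R) : R :=
  U * (1 - U) * ((1 - Q) * (3 - 4 * U) - 5 * Q * (1 - U)).
Definition VQ (U Q : R) : R :=
  Q * (1 - Q) * ((2 * U - 1) * (1 - Q) + Q * (1 - U)).

(* The first integral F; fractional powers via Rpower (bases are > 0 on (0,1)^2). *)
Definition Fint (U Q : R) : R :=
  (U * (4 - 7 * Q) - 3 * (1 - 2 * Q))
  * Rpower U (1/2) * Rpower Q (3/2)
  * Rpower (1 - U) (-3/2) * Rpower (1 - Q) (-5/2).

Definition in_box (U Q : R) : Prop := 0 < U < 1 /\ 0 < Q < 1.

Definition is_solution (a b : Rbar) (U Q : R -> R) : Prop :=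
  forall l : R, Rbar_lt a l -> Rbar_lt l b ->
    in_box (U l) (Q l) /\
    is_derive U l (VU (U l) (Q l)) /\
    is_derive Q l (VQ (U l) (Q l)).

(* Main.v *)
Require Import Defs.
From Stdlib Require Import Reals Lra Psatz Ranalysis5 ClassicalEpsilon Classical.
From Coquelicot Require Import Coquelicot.
Open Scope R_scope.

Definition Fs (U Q : R) : R :=
  (U * (4 - 7 * Q) - 3 * (1 - 2 * Q)) * sqrt U * (Q * sqrt Q)
  / ((1 - U) * sqrt (1 - U) * ((1 - Q) * (1 - Q) * sqrt (1 - Q))).

Lemma Rpower_32 x : 0 < x -> Rpower x (3/2) = x * sqrt x.
Proof. intros H. replace (3/2) with (1 + /2) by field.
rewrite Rpower_plus, Rpower_1, Rpower_sqrt; auto. Qed.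

Lemma Rpower_52 x : 0 < x -> Rpower x (5/2) = x * x * sqrt x.
Proof. intros H. replace (5/2) with (INR 2 + /2) by (simpl; field).
rewrite Rpower_plus, Rpower_pow, Rpower_sqrt; auto. simpl; ring. Qed.

Lemma Fint_Fs U Q : in_box U Q -> Fint U Q = Fs U Q.
Proof.
intros [[H1 H2] [H3 H4]]. unfold Fint, Fs.
replace (-3/2) with (-(3/2)) by field. replace (-5/2) with (-(5/2)) by field.
rewrite !Rpower_Ropp, Rpower_32, !Rpower_52, Rpower_32; try lra.
replace (1/2) with (/2) by field. rewrite Rpower_sqrt; auto.
assert (0 < sqrt (1-U)) by (apply sqrt_lt_R0; lra).
assert (0 < sqrt (1-Q)) by (apply sqrt_lt_R0; lra).
field; repeat split; apply Rgt_not_eq; try lra; nra.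
Qed.

Lemma inv2sqrt x : 0 < x -> / (2 * sqrt x) = sqrt x / (2 * x).
Proof. intros H. assert (0 < sqrt x) by (apply sqrt_lt_R0; lra).
rewrite <- (sqrt_sqrt x) at 3 by lra. field. lra. Qed.

Lemma Fs_deriv (U Q : R -> R) l :
  in_box (U l) (Q l) -> is_derive U l (VU (U l) (Q l)) -> is_derive Q l (VQ (U l) (Q l)) ->
  is_derive (fun x => Fs (U x) (Q x)) l 0.
Proof.
intros [[H1 H2] [H3 H4]] dU dQ.
assert (0 < sqrt (1 + - U l)) by (apply sqrt_lt_R0; lra).
assert (0 < sqrt (1 + - Q l)) by (apply sqrt_lt_R0; lra).
unfold Fs. auto_derive.
- repeat split; try (eexists; eassumption); try lra.
  apply Rgt_not_eq. apply Rmult_lt_0_compat; apply Rmult_lt_0_compat; try lra; nra.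
- change (Derive (fun x => U x) l) with (Derive U l).
  change (Derive (fun x => Q x) l) with (Derive Q l).
  rewrite (is_derive_unique _ _ _ dU), (is_derive_unique _ _ _ dQ).
  rewrite !inv2sqrt by lra.
  unfold VU, VQ.
  assert (0 < sqrt (U l)) by (apply sqrt_lt_R0; lra).
  assert (0 < sqrt (Q l)) by (apply sqrt_lt_R0; lra).
  field. repeat split; apply Rgt_not_eq; try lra. 
Qed.

Lemma deriv0_const (f : R -> R) a b :
  (forall x, Rmin a b <= x <= Rmax a b -> is_derive f x 0) -> f a = f b.
Proof.
intros H.
destruct (MVT_gen f a b (fun _ => 0)) as [c [_ Hc]].
- intros x Hx. apply H. lra.
- intros x Hx. apply continuity_pt_filterlim. apply (ex_derive_continuous (V:=R_NormedModule)).
  eexists. apply H. exact Hx.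
- lra.
Qed.

Lemma Rbar_between (a b : Rbar) (l1 l2 x : R) :
  Rbar_lt a l1 -> Rbar_lt l1 b -> Rbar_lt a l2 -> Rbar_lt l2 b ->
  Rmin l1 l2 <= x <= Rmax l1 l2 -> Rbar_lt a x /\ Rbar_lt x b.
Proof.
intros h1 h2 h3 h4 hx. unfold Rmin, Rmax in hx.
destruct a as [a| |]; destruct b as [b| |]; simpl in *; try tauto;
destruct (Rle_dec l1 l2); split; try exact I; lra.
Qed.

Lemma part1 : forall (a b : Rbar) (U Q : R -> R), is_solution a b U Q ->
     forall l1 l2 : R, Rbar_lt a l1 -> Rbar_lt l1 b -> Rbar_lt a l2 -> Rbar_lt l2 b ->
       Fint (U l1) (Q l1) = Fint (U l2) (Q l2).
Proof.
intros a b U Q HS l1 l2 h1 h2 h3 h4.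
destruct (HS l1 h1 h2) as [B1 _]. destruct (HS l2 h3 h4) as [B2 _].
rewrite !Fint_Fs by assumption.
apply (deriv0_const (fun x => Fs (U x) (Q x))).
intros x Hx. destruct (Rbar_between a b l1 l2 x h1 h2 h3 h4 Hx) as [k1 k2].
destruct (HS x k1 k2) as [B [D1 D2]]. apply Fs_deriv; assumption.
Qed.

Lemma part2 : VU (1/3) (1/3) = 0 /\ VQ (1/3) (1/3) = 0 /\ Fint (1/3) (1/3) = -1/4.
Proof.
split; [unfold VU; field|split; [unfold VQ; field|]].
rewrite Fint_Fs by (split; lra). unfold Fs.
assert (E1 := sqrt_sqrt (1/3) ltac:(lra)).
assert (E2 := sqrt_sqrt (1 - 1/3) ltac:(lra)).
assert (P1 := sqrt_lt_R0 (1/3) ltac:(lra)).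
assert (P2 := sqrt_lt_R0 (1 - 1/3) ltac:(lra)).
revert E1 E2 P1 P2. generalize (sqrt (1/3)) (sqrt (1 - 1/3)). intros a b E1 E2 P1 P2.
replace ((1/3) * (4 - 7 * (1/3)) - 3 * (1 - 2 * (1/3))) with (-4/9) by field.
replace (-4/9 * a * (1/3 * a)) with (-4/27 * (a*a)) by field.
replace ((1 - 1/3) * b * ((1 - 1/3) * (1 - 1/3) * b)) with ((2/3)*(2/3)*(2/3) * (b*b)) by field.
rewrite E1, E2. field.
Qed.

Lemma lim_comp_cont (f g : R -> R) (x : Rbar) (l : R) :
  is_lim g x l -> continuity_pt f l -> is_lim (fun y => f (g y)) x (f l).
Proof.
intros H C. unfold is_lim in *. eapply filterlim_comp; [exact H|].
apply continuity_pt_filterlim. exact C.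
Qed.

Lemma limM (f g : R -> R) x (a b c : R) : is_lim f x a -> is_lim g x b -> c = a * b ->
  is_lim (fun y => f y * g y) x c.
Proof. intros A B ->. change (is_lim (fun y => f y * g y) x (Rbar_mult a b)). apply (is_lim_mult f g x a b); auto. simpl; auto. Qed.
Lemma limP (f g : R -> R) x (a b c : R) : is_lim f x a -> is_lim g x b -> c = a + b ->
  is_lim (fun y => f y + g y) x c.
Proof. intros A B ->. change (is_lim (fun y => f y + g y) x (Rbar_plus a b)). apply (is_lim_plus f g x a b); auto. simpl; auto. apply Rbar_plus_correct; simpl; auto. Qed.
Lemma limm (f g : R -> R) x (a b c : R) : is_lim f x a -> is_lim g x b -> c = a - b ->
  is_lim (fun y => f y - g y) x c.
Proof. intros A B ->. change (is_lim (fun y => f y - g y) x (Rbar_minus a b)). apply (is_lim_minus f g x a b); auto. apply Rbar_plus_correct; simpl; auto. Qed.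
Lemma limI (f : R -> R) x (a c : R) : is_lim f x a -> a <> 0 -> c = / a ->
  is_lim (fun y => / f y) x c.
Proof. intros A H ->. change (is_lim (fun y => / f y) x (Rbar_inv a)). apply (is_lim_inv f x a); auto. intros E; injection E; auto. Qed.
Lemma limN (f : R -> R) x (a c : R) : is_lim f x a -> c = - a ->
  is_lim (fun y => - f y) x c.
Proof. intros A ->. change (is_lim (fun y => - f y) x (Rbar_opp a)). apply (is_lim_opp f x a); auto. Qed.
Lemma limC x (a c : R) : c = a -> is_lim (fun _ => a) x c.
Proof. intros ->. apply is_lim_const. Qed.

Lemma lim_sqrt (g : R -> R) x (l c : R) : is_lim g x l -> 0 <= l -> c = sqrt l ->
  is_lim (fun y => sqrt (g y)) x c.
Proof. intros H P ->. apply lim_comp_cont; auto. apply continuity_pt_sqrt. auto. Qed.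

Ltac limt H1 H2 :=
  repeat first [ exact H1 | exact H2 | eapply limC; reflexivity | eapply limm | eapply limN | eapply limM | eapply limP | eapply limI
               | eapply lim_sqrt | reflexivity | lra ].

Lemma lim_Fs (U Q : R -> R) :
  is_lim U m_infty (3/4) -> is_lim Q m_infty 0 ->
  is_lim (fun y => Fs (U y) (Q y)) m_infty 0.
Proof.
intros LU LQ. unfold Fs, Rdiv. limt LU LQ.
assert (0 < sqrt (1 - 3/4)) by (apply sqrt_lt_R0; lra). assert (0 < sqrt (1 - 0)) by (apply sqrt_lt_R0; lra). apply Rgt_not_eq. repeat apply Rmult_lt_0_compat; lra.
Qed.

Lemma part3 : forall (b : Rbar) (U Q : R -> R), is_solution m_infty b U Q ->
     is_lim U m_infty (3/4) -> is_lim Q m_infty 0 ->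
     forall l : R, Rbar_lt l b -> Fint (U l) (Q l) = 0.
Proof.
intros b U Q HS LU LQ l Hl.
assert (Hc : forall y, y < l -> Fs (U y) (Q y) = Fint (U l) (Q l)).
{ intros y Hy. assert (Hyb : Rbar_lt y b).
  { destruct b as [b| |]; simpl in *; auto; lra. }
  rewrite <- (part1 m_infty b U Q HS y l); simpl; auto.
  destruct (HS y I Hyb) as [B _]. symmetry. apply Fint_Fs; auto. }
assert (L := lim_Fs U Q LU LQ).
assert (L2 : is_lim (fun _ => Fint (U l) (Q l)) m_infty 0).
{ eapply is_lim_ext_loc; [|exact L]. exists l. intros y Hy. apply Hc; auto. }
apply is_lim_unique in L2. rewrite Lim_const in L2. injection L2; auto.
Qed.

Definition sfun rho th := sqrt 6 * rho * cos th.
Definition alf rho th := PI/3 - 2/3 * asin (sfun rho th).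
Definition wf rho th := sqrt (cos (alf rho th)).
Definition pf rho th := - rho * sin th.
Definition Yw w := (2*(w*w) - 1) * sqrt ((w*w+1)/12).
Definition om w := w*(6*(w*w)+3)/(w*w+1) * sqrt ((w*w+1)/12).

Definition goodrho rho := 0 < rho /\ rho * rho < 1/12.

Lemma sfun_sq rho th : goodrho rho -> sfun rho th * sfun rho th < 1/2.
Proof.
intros [H1 H2]. unfold sfun.
assert (E := sqrt_sqrt 6 ltac:(lra)).
assert (c2 : cos th * cos th <= 1) by (generalize (COS_bound th); intros; nra).
replace (sqrt 6 * rho * cos th * (sqrt 6 * rho * cos th)) with
  ((sqrt 6 * sqrt 6) * (rho * rho) * (cos th * cos th)) by ring.
rewrite E. nra.
Qed.

Lemma asin_small s : s * s < 1/2 -> - (PI/4) < asin s < PI/4.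
Proof.
intros Hs.
assert (Hb : -1 <= s <= 1) by (split; nra).
assert (S := sin_asin s Hb). assert (B := asin_bound s).
assert (Hr : sin (PI/4) * sin (PI/4) = 1/2).
{ rewrite sin_PI4. assert (E := sqrt_sqrt 2 ltac:(lra)).
  assert (0 < sqrt 2) by apply Rlt_sqrt2_0.
  replace (1 / sqrt 2 * (1 / sqrt 2)) with (/ (sqrt 2 * sqrt 2)) by (field; lra).
  rewrite E. field. }
assert (P4 : 0 < sin (PI/4)) by (rewrite sin_PI4; apply Rdiv_lt_0_compat; [lra|apply Rlt_sqrt2_0]).
assert (PIpos := PI_RGT_0).
split.
- destruct (Rle_lt_dec (asin s) (-(PI/4))) as [h|h]; auto.
  exfalso. destruct (Req_dec (asin s) (-(PI/4))) as [e|e].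
  + rewrite e, sin_neg in S. nra.
  + assert (sin (asin s) < sin (-(PI/4))) by (apply sin_increasing_1; lra).
    rewrite sin_neg in H. nra.
- destruct (Rle_lt_dec (PI/4) (asin s)) as [h|h]; auto.
  exfalso. destruct (Req_dec (asin s) (PI/4)) as [e|e].
  + rewrite e in S. nra.
  + assert (sin (PI/4) < sin (asin s)) by (apply sin_increasing_1; lra).
    nra.
Qed.

Lemma alf_range rho th : goodrho rho -> PI/6 < alf rho th < PI/2.
Proof.
intros G. assert (A := asin_small _ (sfun_sq rho th G)).
unfold alf. lra.
Qed.

Lemma cos_alf_pos rho th : goodrho rho -> 0 < cos (alf rho th).
Proof.
intros G. assert (A := alf_range rho th G). assert (PIpos := PI_RGT_0).
apply cos_gt_0; lra.
Qed.

Lemma wf_pos rho th : goodrho rho -> 0 < wf rho th.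
Proof. intros G. apply sqrt_lt_R0, cos_alf_pos, G. Qed.

Lemma wf_sq rho th : goodrho rho -> wf rho th * wf rho th = cos (alf rho th).
Proof. intros G. apply sqrt_sqrt. apply Rlt_le, cos_alf_pos, G. Qed.

Lemma cos3 x : cos (3 * x) = 4 * cos x * cos x * cos x - 3 * cos x.
Proof.
replace (3 * x) with (2 * x + x) by ring. rewrite cos_plus, cos_2a, sin_2a.
assert (E := sin2_cos2 x). unfold Rsqr in E.
assert (H : sin x * sin x = 1 - cos x * cos x) by lra.
transitivity (cos x * (cos x * cos x - 3 * (sin x * sin x))); [ring|].
rewrite H. ring.
Qed.

Lemma eq_from_sq x y : x * x = y * y -> 0 <= x * y -> x = y.
Proof. intros H1 H2.
assert (H : (x - y) * (x + y) = 0) by lra.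
apply Rmult_integral in H. destruct H as [H|H]; [lra|].
assert (y = - x) by lra. subst y. nra. Qed.

Lemma sin_pos_of a : - (PI/2) <= a <= PI/2 -> 0 < sin a -> 0 < a.
Proof.
intros B H. destruct (Rle_lt_dec a 0) as [h|h]; auto. exfalso.
destruct (Req_dec a 0) as [e|e]. rewrite e, sin_0 in H; lra.
assert (sin a < sin 0) by (apply sin_increasing_1; lra). rewrite sin_0 in H0; lra.
Qed.

Lemma Yw_wf rho th : goodrho rho -> Yw (wf rho th) = rho * cos th.
Proof.
intros G. unfold Yw. rewrite wf_sq by exact G.
assert (A := alf_range rho th G). assert (PIpos := PI_RGT_0).
assert (Hs := sfun_sq rho th G).
assert (Hb : -1 <= sfun rho th <= 1) by (split; nra).
assert (S := sin_asin _ Hb). assert (AB := asin_bound (sfun rho th)).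
assert (As := asin_small _ Hs).
set (c := cos (alf rho th)).
assert (C3 : 4 * c * c * c - 3 * c = 2 * sfun rho th * sfun rho th - 1).
{ unfold c. rewrite <- cos3. unfold alf.
  replace (3 * (PI / 3 - 2 / 3 * asin (sfun rho th))) with (PI - 2 * asin (sfun rho th)) by field.
  rewrite Rtrigo_facts.cos_pi_minus, cos_2a_sin, S. ring. }
assert (c0 : 0 < c) by (unfold c; apply cos_alf_pos, G).
assert (E6 := sqrt_sqrt 6 ltac:(lra)).
assert (Ec := sqrt_sqrt ((c+1)/12) ltac:(lra)).
apply eq_from_sq.
- replace ((2 * c - 1) * sqrt ((c + 1) / 12) * ((2 * c - 1) * sqrt ((c + 1) / 12)))
    with ((2*c-1)*(2*c-1) * (sqrt ((c + 1) / 12) * sqrt ((c + 1) / 12))) by ring.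
  rewrite Ec.
  assert (Hsf : sfun rho th * sfun rho th = 6 * (rho * cos th * (rho * cos th))).
  { unfold sfun. replace (sqrt 6 * rho * cos th * (sqrt 6 * rho * cos th)) with
     (sqrt 6 * sqrt 6 * (rho * cos th * (rho * cos th))) by ring. rewrite E6. ring. }
  nra.
- assert (0 <= sqrt ((c + 1) / 12)) by apply sqrt_pos.
  destruct (Rtotal_order (cos th) 0) as [h|[h|h]].
  +
    assert (sn : sfun rho th < 0).
    { unfold sfun. destruct G. assert (0 < sqrt 6) by (apply sqrt_lt_R0; lra).
      assert (0 < sqrt 6 * rho) by nra. nra. }
    assert (an : asin (sfun rho th) < 0).
    { assert (0 < - asin (sfun rho th)); [|lra].
      apply sin_pos_of. lra. rewrite sin_neg, S. lra. }
    assert (cc : c < 1/2).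
    { unfold c. rewrite <- cos_PI3. apply cos_decreasing_1; unfold alf; lra. }
    destruct G. assert (2*c - 1 < 0) by lra.
    assert (rho * cos th < 0) by nra.
    replace ((2 * c - 1) * sqrt ((c + 1) / 12) * (rho * cos th)) with
      (((2 * c - 1) * (rho * cos th)) * sqrt ((c + 1) / 12)) by ring.
    apply Rmult_le_pos; nra.
  + rewrite h. nra.
  + assert (sn : 0 < sfun rho th).
    { unfold sfun. destruct G. assert (0 < sqrt 6) by (apply sqrt_lt_R0; lra).
      assert (0 < sqrt 6 * rho) by nra. nra. }
    assert (an : 0 < asin (sfun rho th)).
    { apply sin_pos_of. lra. rewrite S. lra. }
    assert (cc : 1/2 < c).
    { unfold c. rewrite <- cos_PI3. apply cos_decreasing_1; unfold alf; lra. }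
    destruct G. assert (0 < 2*c - 1) by lra.
    assert (0 < rho * cos th) by nra.
    replace ((2 * c - 1) * sqrt ((c + 1) / 12) * (rho * cos th)) with
      (((2 * c - 1) * (rho * cos th)) * sqrt ((c + 1) / 12)) by ring.
    apply Rmult_le_pos; nra.
Qed.

Lemma wf_ex_derive rho th : goodrho rho -> ex_derive (wf rho) th.
Proof.
intros G.
apply (ex_derive_ext (fun t => sqrt (cos (PI/3 - 2/3 * atan (sfun rho t / sqrt (1 - Rsqr (sfun rho t))))))).
- intros t. unfold wf, alf. rewrite asin_atan; auto.
  assert (H := sfun_sq rho t G). split; nra.
- assert (H := sfun_sq rho th G). assert (Hc := cos_alf_pos rho th G).
  unfold alf in Hc. rewrite asin_atan in Hc by (split; nra).
  unfold sfun in *. unfold Rsqr. auto_derive. repeat split; auto; try nra.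
  apply Rgt_not_eq. apply sqrt_lt_R0. nra.
Qed.

Lemma om_pos w : 0 < w -> 0 < om w.
Proof.
intros H. unfold om. assert (0 < sqrt ((w*w+1)/12)) by (apply sqrt_lt_R0; nra).
apply Rmult_lt_0_compat; auto. apply Rdiv_lt_0_compat; nra.
Qed.

Lemma Yw_comp_deriv (w : R -> R) th :
  ex_derive w th -> 0 < w th ->
  is_derive (fun t => Yw (w t)) th (om (w th) * Derive w th).
Proof.
intros D P. unfold Yw, om. auto_derive.
- repeat split; auto. nra.
- change (Derive (fun x => w x) th) with (Derive w th).
  rewrite inv2sqrt by nra.
  assert (0 < sqrt ((w th * w th + 1) / 12)) by (apply sqrt_lt_R0; nra).
  unfold Rdiv in *. field. nra.
Qed.

Lemma wf_deriv rho th : goodrho rho ->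
  is_derive (wf rho) th (pf rho th / om (wf rho th)).
Proof.
intros G. assert (D := wf_ex_derive rho th G).
assert (P := wf_pos rho th G).
assert (H1 := Yw_comp_deriv (wf rho) th D P).
assert (H2 : is_derive (fun t => Yw (wf rho t)) th (- rho * sin th)).
{ apply (is_derive_ext (fun t => rho * cos t)). intros t. symmetry. apply Yw_wf, G.
  auto_derive; auto. ring. }
assert (E := is_derive_unique _ _ _ H1). rewrite (is_derive_unique _ _ _ H2) in E.
assert (O := om_pos _ P).
replace (pf rho th / om (wf rho th)) with (Derive (wf rho) th).
- apply Derive_correct, D.
- unfold pf. rewrite E. field. lra.
Qed.

Definition Uw w p := 2*w^5/(w - 2*p + 2*w^5).
Definition Qw w p := (w - 2*p)/(3*w - 2*p).
Definition Nw w p := (w - 2*p + 2*w^5)/(w - 2*p) * ((3*w - 2*p)/(2*w)).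
Definition hf rho th := Nw (wf rho th) (pf rho th) / om (wf rho th).

Lemma Yw_om w : 0 < w -> Yw w * om w = w^5 - w/4.
Proof.
intros H. unfold Yw, om.
assert (E := sqrt_sqrt ((w*w+1)/12) ltac:(nra)).
transitivity ((2 * (w * w) - 1) * (w * (6 * (w * w) + 3) / (w * w + 1)) *
   (sqrt ((w * w + 1) / 12) * sqrt ((w * w + 1) / 12))); [ring|].
rewrite E. field. nra.
Qed.

Lemma energy rho th : goodrho rho ->
  let w := wf rho th in let p := pf rho th in
  w^6 - 3/4 * (w*w) + 3 * (p*p) = 3 * (rho*rho) - 1/4.
Proof.
intros G w p. assert (Y := Yw_wf rho th G). fold w in Y.
assert (P := wf_pos rho th G). fold w in P.
assert (E := sqrt_sqrt ((w*w+1)/12) ltac:(nra)).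
assert (Y2 : Yw w * Yw w = (2*(w*w)-1)*(2*(w*w)-1)*((w*w+1)/12)).
{ unfold Yw. rewrite <- E at 3. ring. }
rewrite Y in Y2. assert (S := sin2_cos2 th). unfold Rsqr in S.
unfold p, pf.
assert (rho * rho * (sin th * sin th) = rho * rho - rho * cos th * (rho * cos th)) by nra.
replace (- rho * sin th * (- rho * sin th)) with (rho * rho * (sin th * sin th)) by ring.
rewrite H, Y2. field.
Qed.

Lemma p_bound rho th : goodrho rho -> 0 < wf rho th - 2 * pf rho th /\ 0 < wf rho th + 2 * pf rho th.
Proof.
intros G. assert (E := energy rho th G). simpl in E.
assert (P := wf_pos rho th G). destruct G as [G1 G2].
set (w := wf rho th) in *. set (p := pf rho th) in *.
assert (w^6 > 0) by (apply pow_lt; auto).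
assert (4 * (p*p) < w * w) by (simpl in *; lra).
split; nra.
Qed.

Lemma UQ_deriv rho th : goodrho rho ->
  is_derive (fun t => Uw (wf rho t) (pf rho t)) th
     (hf rho th * VU (Uw (wf rho th) (pf rho th)) (Qw (wf rho th) (pf rho th))) /\
  is_derive (fun t => Qw (wf rho t) (pf rho t)) th
     (hf rho th * VQ (Uw (wf rho th) (pf rho th)) (Qw (wf rho th) (pf rho th))).
Proof.
intros G.
assert (D := wf_deriv rho th G). assert (DE := ex_intro _ _ D).
assert (P := wf_pos rho th G). assert (B := p_bound rho th G).
assert (Y := Yw_wf rho th G). assert (YO := Yw_om _ P). rewrite Y in YO.
assert (O := om_pos _ P).
assert (w5 : 0 < wf rho th ^ 5) by (apply pow_lt; auto).
destruct G as [G1 G2].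
unfold pf in *.
assert (Ec : cos th = (wf rho th ^ 5 - wf rho th / 4) / om (wf rho th) / rho).
{ rewrite <- YO. field. split; lra. }
split; unfold Uw, Qw, hf, Nw, pf, VU, VQ; auto_derive.
- repeat split; auto; try lra.
- change (Derive (fun x => wf rho x) th) with (Derive (wf rho) th).
  rewrite (is_derive_unique _ _ _ D). unfold pf. rewrite Ec.
  set (w := wf rho th) in *. set (o := om w) in *. set (s := sin th) in *.
  field. repeat split; lra.
- repeat split; auto; try lra.
- change (Derive (fun x => wf rho x) th) with (Derive (wf rho) th).
  rewrite (is_derive_unique _ _ _ D). unfold pf. rewrite Ec.
  set (w := wf rho th) in *. set (o := om w) in *. set (s := sin th) in *.
  field. repeat split; lra.
Qed.

Lemma deriv_cont (f : R -> R) x l : is_derive f x l -> continuity_pt f x.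
Proof. intros H. apply continuity_pt_filterlim. apply (ex_derive_continuous (V:=R_NormedModule)).
exists l. exact H. Qed.

Definition Lam (h : R -> R) (x : R) : R := RInt h 0 x.

Lemma Lam_deriv (h : R -> R) x : (forall y, continuous h y) -> is_derive (Lam h) x (h x).
Proof.
intros Hc. apply (is_derive_RInt (V:=R_NormedModule) h (Lam h) 0 x).
- exists (mkposreal 1 Rlt_0_1). intros y _. apply (RInt_correct (V:=R_CompleteNormedModule)).
  apply (ex_RInt_continuous (V:=R_CompleteNormedModule)). intros; auto.
- apply Hc.
Qed.

Lemma Lam_ex_RInt (h : R -> R) a b : (forall y, continuous h y) -> ex_RInt (V:=R_CompleteNormedModule) h a b.
Proof. intros Hc. apply (ex_RInt_continuous (V:=R_CompleteNormedModule)). intros; auto. Qed.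

Lemma Lam_cont (h : R -> R) x : (forall y, continuous h y) -> continuity_pt (Lam h) x.
Proof.
intros Hc. apply continuity_pt_filterlim. apply (ex_derive_continuous (V:=R_NormedModule)).
eexists. apply Lam_deriv, Hc.
Qed.

Lemma Lam_incr (h : R -> R) a b : (forall y, continuous h y) -> (forall y, 0 < h y) ->
  a < b -> Lam h a < Lam h b.
Proof.
intros Hc Hp Hab.
destruct (MVT_gen (Lam h) a b h) as [c [_ Hm]].
- intros x _. apply Lam_deriv, Hc.
- intros x _. apply Lam_cont, Hc.
- assert (0 < h c) by auto. nra.
Qed.

Lemma Lam_per (h : R -> R) P x : (forall y, continuous h y) -> (forall y, h (y + P) = h y) ->
  Lam h (x + P) = Lam h x + Lam h P.
Proof.
intros Hc Hper.
assert (K : forall x, is_derive (fun t => Lam h (t + P) - Lam h t) x 0).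
{ intros y. replace 0 with (h (y+P) * 1 - h y) by (rewrite Hper; ring).
  assert (D1 : is_derive (fun t => Lam h (t+P)) y (h (y+P) * 1)).
  { replace (h (y+P) * 1) with (scal (V:=R_NormedModule) (K:=R_AbsRing) 1 (h (y+P))) by (unfold scal; simpl; unfold mult; simpl; ring).
    apply (is_derive_comp (Lam h) (fun t => t + P)). apply Lam_deriv, Hc.
    auto_derive; auto. }
  assert (D2 := Lam_deriv h y Hc).
  apply is_derive_Reals in D1. apply is_derive_Reals in D2. apply is_derive_Reals.
  apply (derivable_pt_lim_minus (fun t => Lam h (t+P)) (Lam h)); auto. }
assert (E : forall a b, (fun t => Lam h (t + P) - Lam h t) a = (fun t => Lam h (t + P) - Lam h t) b).
{ intros a b. destruct (MVT_gen (fun t => Lam h (t + P) - Lam h t) a b (fun _ => 0)) as [c [_ Hm]].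
  - intros; apply K.
  - intros z _. eapply deriv_cont. apply K.
  - lra. }
specialize (E x 0). simpl in E. replace (0 + P) with P in E by ring.
unfold Lam in *. rewrite RInt_point in E. unfold zero in E; simpl in E. lra.
Qed.


Lemma Lam_0 (h : R -> R) : Lam h 0 = 0.
Proof. unfold Lam. rewrite RInt_point. reflexivity. Qed.

Lemma Lam_inj (h : R -> R) a b : (forall y, continuous h y) -> (forall y, 0 < h y) ->
  Lam h a = Lam h b -> a = b.
Proof.
intros Hc Hp E. destruct (Rtotal_order a b) as [l|[e|l]]; auto.
- apply (Lam_incr h) in l; auto. lra.
- apply (Lam_incr h) in l; auto. lra.
Qed.

Lemma Lam_nP (h : R -> R) P (n : nat) : (forall y, continuous h y) -> (forall y, h (y + P) = h y) ->
  Lam h (INR n * P) = INR n * Lam h P /\ Lam h (- (INR n * P)) = - (INR n * Lam h P).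
Proof.
intros Hc Hper. induction n as [|n IH].
- simpl. rewrite Rmult_0_l, Ropp_0, Lam_0. rewrite Rmult_0_l, Ropp_0. split; reflexivity.
- rewrite S_INR. destruct IH as [I1 I2]. split.
  + replace ((INR n + 1) * P) with (INR n * P + P) by ring.
    rewrite Lam_per; auto. rewrite I1. ring.
  + assert (E := Lam_per h P (- ((INR n + 1) * P)) Hc Hper).
    replace (- ((INR n + 1) * P) + P) with (- (INR n * P)) in E by ring. lra.
Qed.

Lemma Lam_surj (h : R -> R) P y : (forall y, continuous h y) -> (forall y, 0 < h y) ->
  0 < P -> (forall y, h (y + P) = h y) -> exists x, Lam h x = y.
Proof.
intros Hc Hp HP Hper.
assert (T0 : 0 < Lam h P) by (rewrite <- (Lam_0 h); apply Lam_incr; auto).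
destruct (INR_archimed (Lam h P) (Rabs y) T0) as [n Hn].
destruct (Lam_nP h P n Hc Hper) as [E1 E2].
assert (Ha : Rabs y < INR n * Lam h P) by lra.
apply Rabs_def2 in Ha. destruct Ha as [Ha1 Ha2].
destruct (IVT (fun x => Lam h x - y) (- (INR n * P)) (INR n * P)) as [z [_ Hz]].
- intros x. apply continuity_pt_minus. apply Lam_cont, Hc. apply continuity_pt_const. intros ? ?; auto.
- assert (0 < INR n) by (destruct n; [simpl in *; lra| apply lt_0_INR; lia]). nra.
- simpl. lra.
- simpl. lra.
- exists z. simpl in Hz. lra.
Qed.

Definition goodh (h : R -> R) (P : R) :=
  (forall y, continuous h y) /\ (forall y, 0 < h y) /\ 0 < P /\ (forall y, h (y + P) = h y).

Definition Th (h : R -> R) (P : R) (G : goodh h P) (y : R) : R :=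
  proj1_sig (constructive_indefinite_description _
    (let '(conj Hc (conj Hp (conj HP Hper))) := G in Lam_surj h P y Hc Hp HP Hper)).

Lemma Th_spec h P G y : Lam h (Th h P G y) = y.
Proof.
unfold Th. destruct (constructive_indefinite_description _ _) as [x Hx]. simpl. exact Hx.
Qed.

Lemma Th_Lam h P (G : goodh h P) x : Th h P G (Lam h x) = x.
Proof.
assert (G' := G). destruct G' as [Hc [Hp _]]. apply (Lam_inj h); auto. apply Th_spec.
Qed.

Lemma Th_per h P (G : goodh h P) y : Th h P G (y + Lam h P) = Th h P G y + P.
Proof.
assert (G' := G). destruct G' as [Hc [Hp [HP Hper]]].
rewrite <- (Th_spec h P G y) at 1. rewrite <- Lam_per; auto. apply Th_Lam.
Qed.

Lemma Th_incr h P (G : goodh h P) a b : a <= b -> Th h P G a <= Th h P G b.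
Proof.
intros Hab. assert (G' := G). destruct G' as [Hc [Hp _]].
destruct (Rle_lt_dec (Th h P G a) (Th h P G b)) as [l|l]; auto.
apply (Lam_incr h) in l; auto. rewrite !Th_spec in l. lra.
Qed.

Lemma Th_deriv h P (G : goodh h P) y : is_derive (Th h P G) y (/ h (Th h P G y)).
Proof.
assert (G' := G). destruct G' as [Hc [Hp [HP Hper]]].
set (g := Th h P G). set (f := Lam h).
assert (fg : forall x, f (g x) = x) by (intros; apply Th_spec).
assert (gf : forall x, g (f x) = x) by (intros; apply Th_Lam).
assert (Prf : forall a : R, g (y-1) <= a <= g (y+1) -> derivable_pt f a).
{ intros a _. exists (h a). apply is_derive_Reals, Lam_deriv, Hc. }
assert (Cg : continuity_pt g y).
{ apply (continuity_pt_recip_interv f g (g y - 1) (g y + 1)); try lra.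
  - intros a b _ ab _. apply Lam_incr; auto.
  - intros x _ _. apply fg.
  - intros x H1 H2. apply (Th_incr h P G) in H1. apply (Th_incr h P G) in H2.
    fold g in H1, H2. rewrite gf in H1, H2. lra.
  - intros a _. apply Lam_cont, Hc.
  - assert (f (g y - 1) < f (g y)) by (apply Lam_incr; auto; lra).
    assert (f (g y) < f (g y + 1)) by (apply Lam_incr; auto; lra).
    rewrite fg in *. lra. }
assert (Hin : g (y-1) <= g y <= g (y+1)) by (split; apply Th_incr; lra).
assert (D := derivable_pt_lim_recip_interv f g (y-1) (y+1) y Prf Cg ltac:(lra) ltac:(lra) Hin
  ltac:(intros; apply fg)).
assert (Ed : derive_pt f (g y) (Prf (g y) Hin) = h (g y)).
{ apply derive_pt_eq_0. apply is_derive_Reals, Lam_deriv, Hc. }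
rewrite Ed in D. apply is_derive_Reals. specialize (Hp (g y)).
replace (/ h (g y)) with (1 / h (g y)) by (field; lra).
apply D. lra.
Qed.

Lemma Fs_G U Q : in_box U Q ->
  Fs U Q = (U/(1-U) + 3*(Q/(1-Q)) - 3) * (Q/(1-Q)) * sqrt (U/(1-U) * (Q/(1-Q))).
Proof.
intros [[H1 H2] [H3 H4]].
rewrite sqrt_mult by (apply Rlt_le, Rdiv_lt_0_compat; lra).
rewrite !sqrt_div by lra.
unfold Fs.
assert (0 < sqrt U) by (apply sqrt_lt_R0; lra).
assert (0 < sqrt Q) by (apply sqrt_lt_R0; lra).
assert (0 < sqrt (1-U)) by (apply sqrt_lt_R0; lra).
assert (0 < sqrt (1-Q)) by (apply sqrt_lt_R0; lra).
field. repeat split; lra.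
Qed.

Lemma Fint_wp w p : 0 < w -> 0 < w - 2 * p ->
  in_box (Uw w p) (Qw w p) /\ Fint (Uw w p) (Qw w p) = w^6 - 3/4*(w*w) + 3*(p*p).
Proof.
intros Hw Hp.
assert (w5 : 0 < w^5) by (apply pow_lt; auto).
assert (B : in_box (Uw w p) (Qw w p)).
{ unfold in_box, Uw, Qw. repeat split.
  - apply Rdiv_lt_0_compat; lra.
  - apply Rmult_lt_reg_r with (w - 2*p + 2*w^5); [lra|]. unfold Rdiv.
    rewrite Rmult_assoc, Rinv_l by lra. lra.
  - apply Rdiv_lt_0_compat; lra.
  - apply Rmult_lt_reg_r with (3*w - 2*p); [lra|]. unfold Rdiv.
    rewrite Rmult_assoc, Rinv_l by lra. lra. }
split; auto.
rewrite Fint_Fs, Fs_G by auto.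
assert (Eu : Uw w p / (1 - Uw w p) = 2 * w^5 / (w - 2*p)).
{ unfold Uw. field. lra. }
assert (Eq : Qw w p / (1 - Qw w p) = (w - 2*p) / (2*w)).
{ unfold Qw. field. lra. }
rewrite Eu, Eq.
replace (2 * w ^ 5 / (w - 2 * p) * ((w - 2 * p) / (2 * w))) with ((w*w)*(w*w)) by (field; lra).
rewrite sqrt_square by nra. field. lra.
Qed.

Lemma box_rep U Q : in_box U Q ->
  let q := Q/(1-Q) in let w := sqrt (sqrt (U/(1-U) * q)) in let p := w * (1/2 - q) in
  0 < w /\ 0 < w - 2*p /\ Uw w p = U /\ Qw w p = Q.
Proof.
intros B q w p. destruct B as [[H1 H2] [H3 H4]].
set (u := U/(1-U)) in *.
assert (u0 : 0 < u) by (apply Rdiv_lt_0_compat; lra).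
assert (q0 : 0 < q) by (apply Rdiv_lt_0_compat; lra).
assert (X0 : 0 < sqrt (u * q)) by (apply sqrt_lt_R0; nra).
assert (w0 : 0 < w) by (apply sqrt_lt_R0; auto).
assert (E1 : w * w = sqrt (u*q)) by (apply sqrt_sqrt; lra).
assert (E2 : sqrt (u*q) * sqrt (u*q) = u * q) by (apply sqrt_sqrt; nra).
assert (Dp : w - 2 * p = 2 * w * q) by (unfold p; field).
clearbody p w.
assert (E4 : w^5 = w * (u * q)) by (rewrite <- E2, <- E1; ring).
split; auto. split; [rewrite Dp; nra|].
unfold Uw, Qw. rewrite Dp, E4. split.
- transitivity (u / (1 + u)). field. repeat split; nra.
  unfold u. field. split; lra.
- replace (3 * w - 2 * p) with (2 * w + (w - 2*p)) by ring. rewrite Dp.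
  transitivity (q / (1 + q)). field. split; nra.
  unfold q. field. split; lra.
Qed.

Lemma Yw_strict a b : 0 < a -> a < b -> Yw a < Yw b.
Proof.
intros Ha Hab. unfold Yw.
set (A := a*a). set (B := b*b).
assert (AB : A < B) by (unfold A, B; nra). assert (A0 : 0 < A) by (unfold A; nra).
assert (SA : 0 < sqrt ((A+1)/12)) by (apply sqrt_lt_R0; lra).
assert (SAB : sqrt ((A+1)/12) <= sqrt ((B+1)/12)) by (apply sqrt_le_1_alt; lra).
assert (EA := sqrt_sqrt ((A+1)/12) ltac:(lra)).
assert (EB := sqrt_sqrt ((B+1)/12) ltac:(lra)).
destruct (Rle_lt_dec 0 (2*B-1)) as [h|h].
- apply Rlt_le_trans with ((2*B-1) * sqrt ((A+1)/12)).
  + apply Rmult_lt_compat_r; lra.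
  + apply Rmult_le_compat_l; lra.
- set (x := (2*A-1) * sqrt ((A+1)/12)). set (y := (2*B-1) * sqrt ((B+1)/12)).
  assert (SB : 0 < sqrt ((B+1)/12)) by (apply sqrt_lt_R0; lra).
  assert (y0 : y < 0) by (unfold y; nra).
  assert (Ex : x * x = (2*A-1)*(2*A-1)*((A+1)/12)) by (unfold x; transitivity ((2*A-1)*(2*A-1)*(sqrt ((A+1)/12) * sqrt ((A+1)/12))); [ring|rewrite EA; ring]).
  assert (Ey : y * y = (2*B-1)*(2*B-1)*((B+1)/12)) by (unfold y; transitivity ((2*B-1)*(2*B-1)*(sqrt ((B+1)/12) * sqrt ((B+1)/12))); [ring|rewrite EB; ring]).
  assert (K : (2*B-1)*(2*B-1)*((B+1)/12) < (2*A-1)*(2*A-1)*((A+1)/12)).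
  { assert (A*A + A*B + B*B < 3/4) by nra.
    assert ((A - B) * (4 * (A*A + A*B + B*B) - 3) > 0) by nra. nra. }
  destruct (Rle_lt_dec y x) as [h2|h2]; auto.
  exfalso. assert (2*A-1 < 0) by lra. assert (x0 : x < 0) by (unfold x; apply Ropp_lt_cancel; rewrite Ropp_0, Ropp_mult_distr_l; apply Rmult_lt_0_compat; lra).
  assert (0 <= (x - y) * (- x - y)) by (apply Rmult_le_pos; lra). nra.
Qed.

Lemma Yw_inj a b : 0 < a -> 0 < b -> Yw a = Yw b -> a = b.
Proof.
intros Ha Hb E. destruct (Rtotal_order a b) as [l|[e|l]]; auto.
- apply Yw_strict in l; auto. lra.
- apply Yw_strict in l; auto. lra.
Qed.

Lemma polar rho x y : 0 < rho -> x*x + y*y = rho*rho ->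
  exists th, rho * cos th = x /\ rho * sin th = y.
Proof.
intros Hr E.
set (c := x / rho).
assert (Hc : -1 <= c <= 1).
{ unfold c. assert (x*x <= rho*rho) by nra. split.
  - apply Rmult_le_reg_r with rho; auto. unfold Rdiv. rewrite Rmult_assoc, Rinv_l by lra. nra.
  - apply Rmult_le_reg_r with rho; auto. unfold Rdiv. rewrite Rmult_assoc, Rinv_l by lra. nra. }
assert (C := cos_acos c Hc). assert (S := sin_acos c Hc).
assert (Q := sqrt_sqrt (1 - c²) ltac:(unfold Rsqr; nra)).
assert (Q0 := sqrt_pos (1 - c²)).
assert (Ey : y * y = (rho * sqrt (1 - c²)) * (rho * sqrt (1 - c²))).
{ transitivity (rho * rho * (sqrt (1 - c²) * sqrt (1 - c²))); [|ring].
  rewrite Q. unfold Rsqr, c. field_simplify; try lra. }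
destruct (Rle_lt_dec 0 y) as [h|h].
- exists (acos c). rewrite C, S. split; [unfold c; field; lra|].
  symmetry. apply eq_from_sq. rewrite Ey; ring.
  apply Rmult_le_pos; try apply Rmult_le_pos; lra.
- exists (- acos c). rewrite cos_neg, sin_neg, C, S. split; [unfold c; field; lra|].
  assert (y = - (rho * sqrt (1 - c²))); [|lra].
  symmetry. apply eq_from_sq. rewrite Ey; ring.
  replace (- (rho * sqrt (1 - c²)) * y) with ((rho * sqrt (1 - c²)) * (- y)) by ring.
  apply Rmult_le_pos; try apply Rmult_le_pos; lra.
Qed.

Lemma cos_2PI_plus th : cos (th + 2*PI) = cos th.
Proof. rewrite cos_plus, cos_2PI, sin_2PI. ring. Qed.
Lemma sin_2PI_plus th : sin (th + 2*PI) = sin th.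
Proof. rewrite sin_plus, cos_2PI, sin_2PI. ring. Qed.

Lemma wf_per rho th : wf rho (th + 2*PI) = wf rho th.
Proof. unfold wf, alf, sfun. rewrite cos_2PI_plus. reflexivity. Qed.
Lemma pf_per rho th : pf rho (th + 2*PI) = pf rho th.
Proof. unfold pf. rewrite sin_2PI_plus. reflexivity. Qed.

Lemma hf_pos rho th : goodrho rho -> 0 < hf rho th.
Proof.
intros G. assert (P := wf_pos rho th G). assert (B := p_bound rho th G).
assert (O := om_pos _ P). assert (w5 : 0 < wf rho th ^ 5) by (apply pow_lt; auto).
unfold hf, Nw. apply Rdiv_lt_0_compat; auto.
apply Rmult_lt_0_compat; apply Rdiv_lt_0_compat; lra.
Qed.

Lemma hf_cont rho th : goodrho rho -> continuous (hf rho) th.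
Proof.
intros G. apply (ex_derive_continuous (V:=R_NormedModule)).
assert (D := wf_ex_derive rho th G).
assert (P := wf_pos rho th G). assert (B := p_bound rho th G).
assert (O := om_pos _ P). assert (w5 : 0 < wf rho th ^ 5) by (apply pow_lt; auto).
unfold hf, Nw, om in *. unfold pf in *. auto_derive.
repeat split; auto; try lra; try nra.
Qed.

Lemma hf_good rho : goodrho rho -> goodh (hf rho) (2*PI).
Proof.
intros G. split; [|split; [|split]].
- intros; apply hf_cont, G.
- intros; apply hf_pos, G.
- apply Rmult_lt_0_compat; [lra|apply PI_RGT_0].
- intros y. unfold hf. rewrite wf_per, pf_per. reflexivity.
Qed.

Lemma goodrho_C C : -1/4 < C < 0 -> goodrho (sqrt ((C + 1/4)/3)).
Proof.
intros H. split. apply sqrt_lt_R0; lra.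
rewrite sqrt_sqrt by lra. lra.
Qed.

Lemma orbit_part C : -1/4 < C < 0 ->
     exists (T : R) (U Q : R -> R),
       0 < T /\
       is_solution m_infty p_infty U Q /\
       (forall l : R, U (l + T) = U l /\ Q (l + T) = Q l) /\
       (forall u q : R, (in_box u q /\ Fint u q = C) <->
                        (exists l : R, U l = u /\ Q l = q)).
Proof.
intros HC.
set (rho := sqrt ((C + 1/4)/3)).
assert (Gr : goodrho rho) by apply goodrho_C, HC.
assert (Er : rho * rho = (C + 1/4)/3) by (apply sqrt_sqrt; lra).
set (G := hf_good rho Gr).
set (Thf := Th (hf rho) (2*PI) G).
exists (Lam (hf rho) (2*PI)).
exists (fun l => Uw (wf rho (Thf l)) (pf rho (Thf l))).
exists (fun l => Qw (wf rho (Thf l)) (pf rho (Thf l))).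
assert (G' := G). destruct G' as [Hc [Hp [HP Hper]]].
split; [|split; [|split]].
- rewrite <- (Lam_0 (hf rho)). apply Lam_incr; auto.
- intros l _ _.
  assert (P := wf_pos rho (Thf l) Gr). assert (B := p_bound rho (Thf l) Gr).
  split; [apply Fint_wp; lra|].
  destruct (UQ_deriv rho (Thf l) Gr) as [DU DQ].
  assert (DT := Th_deriv (hf rho) (2*PI) G l). fold Thf in DT.
  assert (hp := Hp (Thf l)).
  split.
  + assert (K := is_derive_comp _ _ l _ _ DU DT).
    replace (VU _ _) with (scal (/ hf rho (Thf l))
       (hf rho (Thf l) * VU (Uw (wf rho (Thf l)) (pf rho (Thf l))) (Qw (wf rho (Thf l)) (pf rho (Thf l))))).
    exact K. unfold scal; simpl; unfold mult; simpl. field. lra.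
  + assert (K := is_derive_comp _ _ l _ _ DQ DT).
    replace (VQ _ _) with (scal (/ hf rho (Thf l))
       (hf rho (Thf l) * VQ (Uw (wf rho (Thf l)) (pf rho (Thf l))) (Qw (wf rho (Thf l)) (pf rho (Thf l))))).
    exact K. unfold scal; simpl; unfold mult; simpl. field. lra.
- intros l. unfold Thf. rewrite Th_per, wf_per, pf_per. split; reflexivity.
- intros u q. split.
  + intros [Bx Fc].
    destruct (box_rep u q Bx) as [w0 [wp [Eu Eq]]].
    set (q' := q / (1 - q)) in *.
    set (w := sqrt (sqrt (u / (1 - u) * q'))) in *.
    set (p := w * (1 / 2 - q')) in *.
    clearbody p w.
    destruct (Fint_wp w p w0 wp) as [_ Fe]. rewrite Eu, Eq, Fc in Fe.
    assert (Ey : Yw w * Yw w + (- p) * (- p) = rho * rho).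
    { unfold Yw. assert (S := sqrt_sqrt ((w*w+1)/12) ltac:(nra)).
      transitivity ((2 * (w * w) - 1) * (2 * (w * w) - 1) * (sqrt ((w * w + 1) / 12) * sqrt ((w * w + 1) / 12)) + p*p); [ring|].
      rewrite S, Er. simpl in Fe. lra. }
    destruct (polar rho (Yw w) (-p) (proj1 Gr) Ey) as [th0 [E1 E2]].
    assert (Ew : wf rho th0 = w).
    { apply Yw_inj; auto. apply wf_pos, Gr. rewrite Yw_wf by exact Gr. exact E1. }
    assert (Ep : pf rho th0 = p) by (unfold pf; lra).
    exists (Lam (hf rho) th0). unfold Thf. rewrite Th_Lam, Ew, Ep. auto.
  + intros [l [Eu Eq]]. subst u q.
    assert (P := wf_pos rho (Thf l) Gr). assert (B := p_bound rho (Thf l) Gr).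
    destruct (Fint_wp _ _ P (proj1 B)) as [Bx Fe]. split; auto.
    rewrite Fe. assert (E := energy rho (Thf l) Gr). simpl in E. simpl. rewrite E, Er. field.
Qed.

Lemma cM (f g : R -> R) x : continuous f x -> continuous g x -> continuous (fun t => f t * g t) x.
Proof. intros; apply (continuous_mult (K:=R_AbsRing) f g); auto. Qed.
Lemma cP (f g : R -> R) x : continuous f x -> continuous g x -> continuous (fun t => f t + g t) x.
Proof. intros; apply (continuous_plus (V:=R_NormedModule) f g); auto. Qed.
Lemma cm (f g : R -> R) x : continuous f x -> continuous g x -> continuous (fun t => f t - g t) x.
Proof. intros; apply (continuous_minus (V:=R_NormedModule) f g); auto. Qed.
Lemma cN (f : R -> R) x : continuous f x -> continuous (fun t => - f t) x.
Proof. intros; apply (continuous_opp (V:=R_NormedModule) f); auto. Qed.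
Lemma cC (c : R) x : continuous (fun _ : R => c) x.
Proof. apply continuous_const. Qed.
Lemma cR (f : R -> R) y x : continuous f x -> 0 < f x -> continuous (fun t => Rpower (f t) y) x.
Proof.
intros H P. unfold Rpower. apply continuous_exp_comp.
apply (cM (fun _ => y) (fun t => ln (f t))). apply cC.
apply (continuous_comp f ln); auto. apply continuous_ln; auto.
Qed.

Lemma Fint_cont (g1 g2 : R -> R) s : continuous g1 s -> continuous g2 s ->
  in_box (g1 s) (g2 s) -> continuous (fun t => Fint (g1 t) (g2 t)) s.
Proof.
intros H1 H2 [[a b] [c d]]. unfold Fint.
repeat first [ exact H1 | exact H2 | apply cC | apply cM | apply cm | apply cN | apply cP
             | apply cR ]; simpl; lra.
Qed.

Lemma cont_eps (f : R -> R) x : continuous f x ->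
  forall eps, 0 < eps -> exists d, 0 < d /\ forall y, Rabs (y - x) < d -> Rabs (f y - f x) < eps.
Proof.
intros H eps He. apply continuity_pt_filterlim in H.
destruct (H eps He) as [d [dp Hd]]. exists d. split; auto.
intros y Hy. destruct (Req_dec y x) as [e|e].
- subst. rewrite Rminus_diag, Rabs_R0. auto.
- apply Hd. split. split; [exact I|auto]. exact Hy.
Qed.

Lemma le_div a n d : 0 < d -> a * d <= n -> a <= n / d.
Proof. intros H1 H2. apply Rmult_le_reg_r with d; auto. unfold Rdiv.
rewrite Rmult_assoc, Rinv_l by lra. lra. Qed.

Lemma bnd X r C : 0 < X -> 0 < 1 - 2*r -> X*X*X - 3/4*X + 3*X*(r*r) <= C -> C < 0 ->
  C*C/4 <= 2*(X*X)/(1 - 2*r + 2*(X*X)) /\ C*C/4 <= 1 - 2*(X*X)/(1 - 2*r + 2*(X*X)) /\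
  C*C/4 <= (1-2*r)/(3-2*r) /\ C*C/4 <= 1 - (1-2*r)/(3-2*r).
Proof.
intros X0 R0 F C0.
assert (r2 : 0 <= X * (r*r)) by nra.
assert (X3 : 0 < X*X*X) by (repeat apply Rmult_lt_0_compat; auto).
assert (h1 : X*X < 3/4) by nra.
assert (h2 : X < 1) by nra.
assert (h3 : -C <= 3/4 * X) by nra.
assert (h4 : -C/3 <= X * (1/4 - r*r)) by nra.
assert (h4' : 0 < 1/4 - r*r) by nra.
assert (h5 : -C/3 <= 1/4 - r*r) by nra.
assert (h6 : -1/2 < r) by nra.
assert (h7 : -2*C/3 <= 1 - 2*r) by nra.
pose proof (Rle_0_sqr (X - 1/2)) as Hs; unfold Rsqr in Hs.
assert (0 <= (X - 1/2)*(X-1/2)*(X+1)) by (apply Rmult_le_pos; lra).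
assert (d1 : -C <= 1/4) by nra.
assert (D0 : 0 < 1 - 2*r + 2*(X*X)) by nra.
assert (D4 : 1 - 2*r + 2*(X*X) < 4) by nra.
assert (E1 : 1 - 2*(X*X)/(1 - 2*r + 2*(X*X)) = (1 - 2*r)/(1 - 2*r + 2*(X*X))) by (field; lra).
assert (E2 : 1 - (1-2*r)/(3-2*r) = 2/(3-2*r)) by (field; lra).
rewrite E1, E2.
split; [|split; [|split]]; apply le_div; try lra.
- assert (X >= -4*C/3) by lra. nra.
- nra.
- nra.
- nra.
Qed.

Lemma Kbound C U Q : C < 0 -> in_box U Q -> Fint U Q <= C ->
  C*C/4 <= U /\ C*C/4 <= 1 - U /\ C*C/4 <= Q /\ C*C/4 <= 1 - Q.
Proof.
intros C0 Bx F.
destruct (box_rep U Q Bx) as [w0 [wp [Eu Eq]]].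
set (q' := Q / (1 - Q)) in *.
set (w := sqrt (sqrt (U / (1 - U) * q'))) in *.
set (p := w * (1 / 2 - q')) in *.
clearbody p w.
destruct (Fint_wp w p w0 wp) as [_ Fe]. rewrite Eu, Eq in Fe.
assert (w5 : 0 < w^5) by (apply pow_lt; auto).
assert (B := bnd (w*w) (p/w) C ltac:(nra)).
rewrite <- Eu, <- Eq.
replace (Uw w p) with (2 * (w * w * (w * w)) / (1 - 2 * (p / w) + 2 * (w * w * (w * w)))) by (unfold Uw; field; split; lra).
replace (Qw w p) with ((1 - 2 * (p / w)) / (3 - 2 * (p / w))) by (unfold Qw; field; split; lra).
apply B; auto.
- replace (1 - 2 * (p/w)) with ((w - 2*p)/w) by (field; lra). apply Rdiv_lt_0_compat; lra.
- rewrite <- F, Fe. right. field. lra.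
Qed.

Lemma cont_left (f : R -> R) s a : continuous f s -> 0 < s ->
  (forall t, 0 <= t < s -> a <= f t) -> a <= f s.
Proof.
intros Hc Hs H. destruct (Rle_lt_dec a (f s)) as [h|h]; auto. exfalso.
destruct (cont_eps f s Hc (a - f s) ltac:(lra)) as [d [dp Hd]].
set (t := Rmax 0 (s - d/2)).
assert (t1 : 0 <= t < s) by (unfold t, Rmax; destruct (Rle_dec 0 (s - d/2)); lra).
assert (t2 : Rabs (t - s) < d) by (unfold t, Rmax; destruct (Rle_dec 0 (s - d/2)); apply Rabs_def1; lra).
specialize (Hd t t2). specialize (H t t1). apply Rabs_def2 in Hd. lra.
Qed.


Lemma path_cross C (g1 g2 : R -> R) : -1/4 < C < 0 ->
  (forall t : R, 0 <= t <= 1 -> continuous g1 t /\ continuous g2 t) ->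
  g1 0 = 1/3 -> g2 0 = 1/3 -> ~ in_box (g1 1) (g2 1) ->
  exists t : R, 0 <= t <= 1 /\ in_box (g1 t) (g2 t) /\ Fint (g1 t) (g2 t) = C.
Proof.
intros HC Hg G1 G2 Hout.
set (a := C*C/4).
assert (a0 : 0 < a) by (unfold a; nra).
assert (a1 : a < 1/3) by (unfold a; nra).
assert (F0 : Fint (g1 0) (g2 0) = -1/4) by (rewrite G1, G2; apply part2).
assert (B0 : in_box (g1 0) (g2 0)) by (rewrite G1, G2; split; lra).
set (E := fun t => 0 <= t <= 1 /\ forall t', 0 <= t' <= t -> in_box (g1 t') (g2 t') /\ Fint (g1 t') (g2 t') < C).
assert (E0 : E 0).
{ split. lra. intros t' Ht. replace t' with 0 by lra. split; auto. lra. }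
assert (Eb : bound E) by (exists 1; intros x [Hx _]; lra).
destruct (completeness E Eb (ex_intro _ 0 E0)) as [s [Hub Hlub]].
assert (s0 : 0 <= s) by (apply Hub; exact E0).
assert (s1 : s <= 1) by (apply Hlub; intros x [Hx _]; lra).
assert (Cl1 : forall t', 0 <= t' < s -> in_box (g1 t') (g2 t') /\ Fint (g1 t') (g2 t') < C).
{ intros t' Ht. destruct (classic (exists x, E x /\ t' < x)) as [[x [[_ Ex] Hx]]|N].
  - apply Ex. lra.
  - exfalso. assert (s <= t'); [|lra]. apply Hlub. intros x Ex.
    destruct (Rle_lt_dec x t'); auto. exfalso. apply N. exists x; auto. }
destruct (Hg s (conj s0 s1)) as [c1 c2].
assert (Kb : a <= g1 s /\ a <= 1 - g1 s /\ a <= g2 s /\ a <= 1 - g2 s).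
{ destruct (Req_dec s 0) as [e|e].
  - subst s. rewrite G1, G2. lra.
  - assert (sp : 0 < s) by lra.
    assert (K : forall t, 0 <= t < s -> a <= g1 t /\ a <= 1 - g1 t /\ a <= g2 t /\ a <= 1 - g2 t).
    { intros t Ht. destruct (Cl1 t Ht) as [Bt Ft]. apply Kbound; auto. lra. lra. }
    split; [|split; [|split]].
    + apply cont_left; auto. intros t Ht; apply K; auto.
    + apply (cont_left (fun t => 1 - g1 t)); auto. apply cm; auto. apply cC. intros t Ht; apply K; auto.
    + apply cont_left; auto. intros t Ht; apply K; auto.
    + apply (cont_left (fun t => 1 - g2 t)); auto. apply cm; auto. apply cC. intros t Ht; apply K; auto. }
assert (Bs : in_box (g1 s) (g2 s)) by (split; lra).
assert (cF := Fint_cont g1 g2 s c1 c2 Bs).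
assert (Fs_le : Fint (g1 s) (g2 s) <= C).
{ destruct (Req_dec s 0) as [e|e].
  - subst s. lra.
  - assert (- C <= - Fint (g1 s) (g2 s)); [|lra].
    apply (cont_left (fun t => - Fint (g1 t) (g2 t))). apply cN; auto. lra.
    intros t Ht. destruct (Cl1 t Ht). lra. }
destruct (Req_dec (Fint (g1 s) (g2 s)) C) as [e|e].
{ exists s. auto. }
exfalso.
destruct (cont_eps g1 s c1 (a/2) ltac:(lra)) as [d1 [d1p H1]].
destruct (cont_eps g2 s c2 (a/2) ltac:(lra)) as [d2 [d2p H2]].
destruct (cont_eps _ s cF (C - Fint (g1 s) (g2 s)) ltac:(lra)) as [d3 [d3p H3]].
set (d := Rmin d1 (Rmin d2 d3)).
assert (dp : 0 < d) by (unfold d; repeat apply Rmin_pos; auto).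
assert (Near : forall t, Rabs (t - s) < d -> in_box (g1 t) (g2 t) /\ Fint (g1 t) (g2 t) < C).
{ intros t Ht.
  assert (k1 : Rabs (t - s) < d1) by (apply Rlt_le_trans with d; auto; unfold d; apply Rmin_l).
  assert (k2 : Rabs (t - s) < d2) by (apply Rlt_le_trans with d; auto; unfold d;
      eapply Rle_trans; [apply Rmin_r|apply Rmin_l]).
  assert (k3 : Rabs (t - s) < d3) by (apply Rlt_le_trans with d; auto; unfold d;
      eapply Rle_trans; [apply Rmin_r|apply Rmin_r]).
  specialize (H1 t k1). specialize (H2 t k2). specialize (H3 t k3).
  apply Rabs_def2 in H1. apply Rabs_def2 in H2. apply Rabs_def2 in H3.
  split; [split; split|]; lra. }
destruct (Req_dec s 1) as [e1|e1].
- apply Hout. rewrite <- e1. exact Bs.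
- set (ts := Rmin 1 (s + d/2)).
  assert (ts1 : s < ts <= 1) by (unfold ts, Rmin; destruct (Rle_dec 1 (s + d/2)); lra).
  assert (Ets : E ts).
  { split. lra. intros t' Ht'. destruct (Rlt_le_dec t' s) as [l|l].
    - apply Cl1; lra.
    - apply Near. apply Rabs_def1; unfold ts, Rmin in *; destruct (Rle_dec 1 (s + d/2)); lra. }
  assert (ts <= s) by (apply Hub; exact Ets). lra.
Qed.


Theorem mainTheorem9 :
  (* 1. F is constant along every solution in (0,1)^2 *)
  (forall (a b : Rbar) (U Q : R -> R), is_solution a b U Q ->
     forall l1 l2 : R, Rbar_lt a l1 -> Rbar_lt l1 b -> Rbar_lt a l2 -> Rbar_lt l2 b ->
       Fint (U l1) (Q l1) = Fint (U l2) (Q l2)) /\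
  (* 2. (1/3,1/3) is a fixed point, with F = -1/4 there *)
  (VU (1/3) (1/3) = 0 /\ VQ (1/3) (1/3) = 0 /\ Fint (1/3) (1/3) = -1/4) /\
  (* 3. the regular orbit (emanating from (3/4,0) as lambda -> -oo) lies in F = 0 *)
  (forall (b : Rbar) (U Q : R -> R), is_solution m_infty b U Q ->
     is_lim U m_infty (3/4) -> is_lim Q m_infty 0 ->
     forall l : R, Rbar_lt l b -> Fint (U l) (Q l) = 0) /\
  (* 4. for -1/4 < C < 0 the level set {F = C} is a closed orbit around (1/3,1/3) *)
  (forall C : R, -1/4 < C < 0 ->
     exists (T : R) (U Q : R -> R),
       0 < T /\
       is_solution m_infty p_infty U Q /\
       (forall l : R, U (l + T) = U l /\ Q (l + T) = Q l) /\
       (forall u q : R, (in_box u q /\ Fint u q = C) <->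
                        (exists l : R, U l = u /\ Q l = q)) /\
       (forall g1 g2 : R -> R,
          (forall t : R, 0 <= t <= 1 -> continuous g1 t /\ continuous g2 t) ->
          g1 0 = 1/3 -> g2 0 = 1/3 -> ~ in_box (g1 1) (g2 1) ->
          exists t : R, 0 <= t <= 1 /\ in_box (g1 t) (g2 t) /\ Fint (g1 t) (g2 t) = C)).

Proof.
split; [exact part1|]. split; [exact part2|]. split; [exact part3|].
intros C HC. destruct (orbit_part C HC) as [T [U [Q [h1 [h2 [h3 h4]]]]]].
exists T, U, Q. split; [exact h1|]. split; [exact h2|]. split; [exact h3|]. split; [exact h4|].
intros g1 g2 Hg G1 G2 Ho. apply path_cross; auto.
Qed.
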